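(* (1) If $\beta\in\mathcal Q(\Phi_+)$ is not a simple root, then there exists $i\in I$ such that $r_i(\beta)\in\mathcal Q(\Phi_+)$ and $\mathrm{ht}(r_i(\beta^\vee))=\mathrm{ht}(\beta^\vee)-1$. (2) Let $\beta\in\mathcal Q(\Phi_+)$ and $i\in I$. Then $r_i(\beta)\in\mathcal Q(\Phi_+)$ if and only if $|\langle\beta^\vee,\alpha_i\rangle|\le1$.
   Context: Kac–Moody root datum $(A,X,Y,(\alpha_i)_{i\in I},(\alpha_i^\vee)_{i\in I})$ with generalized Cartan matrix $A=(a_{i,j})$, $\langle\alpha_i^\vee,\alpha_j\rangle=a_{i,j}$, simple reflections $r_i(x)=x-\langle\alpha_i^\vee,x\rangle\alpha_i$ on $X$ and $r_i(y)=y-\langle y,\alpha_i\rangle\alpha_i^\vee$ on $Y$, Weyl group $W^v=\langle r_i\rangle$. $\Phi=W^v\{\alpha_i\}$, $\Phi_+=\Phi\cap\bigoplus\mathbb Z_{\ge0}\alpha_i$, $\Phi_-=-\Phi_+$; coroot $\beta^\vee=w(\alpha_i^\vee)$ and reflection $s_\beta=wr_iw^{-1}$ for $\beta=w(\alpha_i)$; $\mathrm{ht}(\sum N_i\alpha_i^\vee)=\sum N_i$. $\mathrm{Inv}(w)=\{\alpha\in\Phi_+\mid w\alpha\in\Phi_-\}$. $\beta\in\Phi_+$ is quantum if $\langle\beta^\vee,\gamma\rangle=1$ for all $\gamma\in\mathrm{Inv}(s_\beta)\setminus\{\beta\}$; $\mathcal Q(\Phi_+)$ is the set of quantum roots. 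*)

(* Defs.v *)
(* Kac–Moody root datum with X = Z^m, Y = Z^m (row vectors),
   the perfect pairing <y,x> being the standard dot product. *)
From Stdlib Require Import ClassicalEpsilon.
From mathcomp Require Import all_boot all_order all_algebra.
Set Implicit Arguments. Unset Strict Implicit. Unset Printing Implicit Defensive.
Import Order.TTheory GRing.Theory Num.Theory.
Local Open Scope ring_scope.

Section KM.
Variables (n m : nat) (alpha alphav : 'I_n -> 'rV[int]_m).

Definition pair (y x : 'rV[int]_m) : int := \sum_(k < m) y 0 k * x 0 k.

Definition rX (i : 'I_n) (x : 'rV[int]_m) := x - pair (alphav i) x *: alpha i.
Definition rY (i : 'I_n) (y : 'rV[int]_m) := y - pair y (alpha i) *: alphav i.

(* an element of W^v given by a word [:: i1; ..; ik] is r_i1 ... r_ik *)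
Definition actX (w : seq 'I_n) x := foldr rX x w.
Definition actY (w : seq 'I_n) y := foldr rY y w.

(* real roots Phi = W^v {alpha_i}; a witness (w, i) with beta = w(alpha_i) *)
Definition is_root (b : 'rV[int]_m) : Prop :=
  exists p : seq 'I_n * 'I_n, b = actX p.1 (alpha p.2).

Definition is_pos_root b : Prop :=
  is_root b /\ exists N : 'I_n -> nat, b = \sum_(i < n) (N i)%:Z *: alpha i.
Definition is_neg_root b : Prop := is_pos_root (- b).

Definition root_rep (b : 'rV[int]_m) : option (seq 'I_n * 'I_n) :=
  match excluded_middle_informative (is_root b) with
  | left H => Some (proj1_sig (constructive_indefinite_description _ H))
  | right _ => None
  end.

Definition coroot b : 'rV[int]_m :=
  if root_rep b is Some p then actY p.1 (alphav p.2) else 0.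

(* word for s_beta = w r_i w^{-1} *)
Definition sword b : seq 'I_n :=
  if root_rep b is Some p then p.1 ++ p.2 :: rev p.1 else [::].

Definition in_Inv (w : seq 'I_n) g : Prop := is_pos_root g /\ is_neg_root (actX w g).

Definition quantum b : Prop :=
  is_pos_root b /\
  forall g, in_Inv (sword b) g -> g <> b -> pair (coroot b) g = 1.

Definition is_simple_root b : Prop := exists i, b = alpha i.

Definition ht (y : 'rV[int]_m) : int :=
  match excluded_middle_informative
          (exists N : 'I_n -> int, y = \sum_(i < n) N i *: alphav i) with
  | left H => let N := proj1_sig (constructive_indefinite_description _ H) in
              \sum_(i < n) N i
  | right _ => 0
  end.

Definition free_family (f : 'I_n -> 'rV[int]_m) : Prop :=
  forall c : 'I_n -> int, \sum_(i < n) c i *: f i = 0 -> forall i, c i = 0.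

End KM.

Definition is_GCM (n : nat) (A : 'M[int]_n) : Prop :=
  (forall i, A i i = 2) /\ (forall i j, i != j -> A i j <= 0) /\
  (forall i j, (A i j == 0) = (A j i == 0)).

(* Main.v *)
Require Import Defs.
From Stdlib Require Import ClassicalEpsilon.
From mathcomp Require Import all_boot all_order all_algebra.
From mathcomp Require Import zify ring lra.
Set Implicit Arguments. Unset Strict Implicit. Unset Printing Implicit Defensive.
Import Order.TTheory GRing.Theory Num.Theory.
Local Open Scope ring_scope.

Section Pair.
Variable m : nat.
Implicit Types x y z : 'rV[int]_m.

Lemma pairDl x y z : pair (x + y) z = pair x z + pair y z.
Proof. by rewrite /pair -big_split; apply: eq_bigr => k _; rewrite mxE mulrDl. Qed.
Lemma pairDr x y z : pair z (x + y) = pair z x + pair z y.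
Proof. by rewrite /pair -big_split; apply: eq_bigr => k _; rewrite mxE mulrDr. Qed.
Lemma pairZl (c : int) x z : pair (c *: x) z = c * pair x z.
Proof. by rewrite /pair mulr_sumr; apply: eq_bigr => k _; rewrite mxE mulrA. Qed.
Lemma pairZr (c : int) x z : pair z (c *: x) = c * pair z x.
Proof. by rewrite /pair mulr_sumr; apply: eq_bigr => k _; rewrite mxE mulrCA. Qed.
Lemma pairNl x z : pair (- x) z = - pair x z.
Proof. by rewrite -scaleN1r pairZl mulN1r. Qed.
Lemma pairNr x z : pair z (- x) = - pair z x.
Proof. by rewrite -scaleN1r pairZr mulN1r. Qed.
Lemma pairBl x y z : pair (x - y) z = pair x z - pair y z.
Proof. by rewrite pairDl pairNl. Qed.
Lemma pairBr x y z : pair z (x - y) = pair z x - pair z y.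
Proof. by rewrite pairDr pairNr. Qed.
Lemma pair0l z : pair 0 z = 0.
Proof. by rewrite -(scale0r 0) pairZl mul0r. Qed.
Lemma pair0r z : pair z 0 = 0.
Proof. by rewrite -(scale0r 0) pairZr mul0r. Qed.
Lemma pairC x y : pair x y = pair y x.
Proof. by rewrite /pair; apply: eq_bigr => k _; rewrite mulrC. Qed.
Lemma pair_suml (I : finType) (F : I -> 'rV[int]_m) z :
  pair (\sum_i F i) z = \sum_i pair (F i) z.
Proof.
rewrite /pair exchange_big; apply: eq_bigr => k _.
by rewrite summxE mulr_suml.
Qed.
Lemma pair_sumr (I : finType) (F : I -> 'rV[int]_m) z :
  pair z (\sum_i F i) = \sum_i pair z (F i).
Proof.
rewrite /pair exchange_big; apply: eq_bigr => k _.
by rewrite summxE mulr_sumr.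
Qed.
End Pair.

Fixpoint coefs (a b : int) (k : nat) : int * int :=
  if k is k'.+1 then
    let: (c1, c2) := coefs a b k' in
    if odd k' then (a * c2 - c1, c2) else (c1, b * c1 - c2)
  else (1, 0).

Fixpoint trk (a b : int) (k : nat) (p q : int) : int * int * int * int :=
  if k is k'.+1 then
    let: (p', q', c1, c2) := trk a b k' p q in
    if odd k' then (- p', q' + b * p', c1 - p', c2)
    else (p' + a * q', - q', c1, c2 - q')
  else (p, q, 0, 0).

Lemma coefs_inf (a b : int) k : 0 <= a -> 0 <= b -> 4 <= a * b ->
  [/\ 0 <= (coefs a b k).1, 0 <= (coefs a b k).2 &
     (if odd k then 2 * (coefs a b k).1 <= a * (coefs a b k).2
      else 2 * (coefs a b k).2 <= b * (coefs a b k).1)].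
Proof.
move=> ha hb hab; elim: k => [|k [] /=]; first by rewrite /= mulr0 mulr1.
case: (coefs a b k) => c1 c2 /= h1 h2.
case: (odd k) => h3 /=.
- have e : 2 * b * c1 <= a * b * c2 by nia.
  split; nia.
- have e : 2 * a * c2 <= a * b * c1 by nia.
  split; nia.
Qed.

Definition finpair (a b : int) :=
  ((a, b) == (0, 0)) || ((a, b) == (1, 1)) || ((a, b) == (1, 2)) ||
  ((a, b) == (2, 1)) || ((a, b) == (1, 3)) || ((a, b) == (3, 1)).

Definition mord (a b : int) : nat :=
  if a * b == 0 then 2 else if a * b == 1 then 3 else if a * b == 2 then 4%N else 6%N.

Lemma fin_cases (a b : int) : 0 <= a -> 0 <= b -> (a == 0) = (b == 0) ->
  a * b < 4 -> finpair a b.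
Proof.
move=> ha hb hz hab.
have [a0|an0] := eqVneq a 0.
  by move: hz; rewrite a0 eqxx => /esym/eqP ->.
move: hz; rewrite (negbTE an0) => /esym/negbT bn0.
have a1 : 1 <= a by lia.
have b1 : 1 <= b by lia.
have a3 : a <= 3 by nia.
have b3 : b <= 3 by nia.
rewrite /finpair.
have ea : a = 1 \/ a = 2 \/ a = 3 by lia.
have eb : b = 1 \/ b = 2 \/ b = 3 by lia.
move: hab; case: ea => [->|[->|->]]; case: eb => [->|[->|->]]; by [].
Qed.

Lemma fin_pos (a b : int) k : finpair a b -> (k < mord a b)%N ->
  0 <= (coefs a b k).1 /\ 0 <= (coefs a b k).2.
Proof.
rewrite /finpair => h.
by repeat (case/orP: h => h); move/eqP: h => [-> ->];
  (do 6! (case: k => [//|k]) => //).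
Qed.

Lemma fin_braid (a b : int) p q : finpair a b ->
  (trk a b (mord a b) p q).1.2 = (trk b a (mord a b) q p).2 /\
  (trk a b (mord a b) p q).2 = (trk b a (mord a b) q p).1.2.
Proof.
rewrite /finpair => h.
by repeat (case/orP: h => h); move/eqP: h => [-> ->]; rewrite /=; split; ring.
Qed.

Lemma mord_sym a b : mord a b = mord b a.
Proof. by rewrite /mord mulrC. Qed.
Lemma mord_gt0 a b : (0 < mord a b)%N.
Proof. by rewrite /mord; repeat case: ifP. Qed.
Lemma finpair_sym a b : finpair a b -> finpair b a.
Proof.
rewrite /finpair => h.
by repeat (case/orP: h => h); move/eqP: h => [-> ->].
Qed.

Fixpoint alt (I : Type) (x y : I) (k : nat) : seq I :=
  if k is k'.+1 then (if odd k' then x else y) :: alt x y k' else [::].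

Lemma alt_rcons (I : Type) (x y : I) k : alt x y k.+1 = rcons (alt y x k) y.
Proof.
elim: k x y => [//|k IH] x y.
have -> : alt x y k.+2 = (if odd k.+1 then x else y) :: alt x y k.+1 by [].
rewrite IH /=; by case: (odd k).
Qed.

Lemma size_alt (I : Type) (x y : I) k : size (alt x y k) = k.
Proof. by elim: k => //= k ->. Qed.

Lemma all_alt (I : Type) (P : pred I) (x y : I) k : P x -> P y -> all P (alt x y k).
Proof. by move=> px py; elim: k => //= k ->; case: (odd k); rewrite ?px ?py. Qed.

Lemma alt_split (I : Type) (P : pred I) (x y : I) k j : P x -> P y ->
  exists2 Q, all P Q /\ size Q = k & alt x y (k + j) = Q ++ alt x y j.
Proof.
move=> px py; elim: k => [|k [Q [aQ sQ] e]]; first by exists [::].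
exists ((if odd (k + j) then x else y) :: Q); last by rewrite addSn /= e.
by rewrite /= aQ sQ; case: (odd _); rewrite ?px ?py.
Qed.

Section Gen.
Variables (n m : nat) (al alv : 'I_n -> 'rV[int]_m) (A : 'M[int]_n).
Hypothesis hA : is_GCM A.
Hypothesis hpair : forall i j, pair (alv i) (al j) = A i j.

Local Notation rx := (rX al alv).
Local Notation ax := (actX al alv).
Local Notation ry := (rX alv al).

Lemma Aii i : A i i = 2. Proof. by case: hA. Qed.

Lemma rxD i x y : rx i (x + y) = rx i x + rx i y.
Proof. by rewrite /rX pairDr scalerDl opprD addrACA. Qed.
Lemma rxZ i c x : rx i (c *: x) = c *: rx i x.
Proof. by rewrite /rX pairZr scalerBr scalerA. Qed.
Lemma rxN i x : rx i (- x) = - rx i x.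
Proof. by rewrite /rX pairNr scaleNr opprB opprK addrC. Qed.
Lemma rx0 i : rx i 0 = 0.
Proof. by rewrite /rX pair0r scale0r subr0. Qed.
Lemma rxB i x y : rx i (x - y) = rx i x - rx i y.
Proof. by rewrite rxD rxN. Qed.

Lemma pair_rx i j x : pair (alv j) (rx i x) = pair (alv j) x - pair (alv i) x * A j i.
Proof. by rewrite /rX pairBr pairZr hpair. Qed.

Lemma rx_al i : rx i (al i) = - al i.
Proof.
rewrite /rX hpair Aii -[2]/(1 + 1) scalerDl scale1r opprD addrA subrr sub0r.
done.
Qed.

Lemma rxK i x : rx i (rx i x) = x.
Proof.
rewrite {2}/rX rxB rxZ rx_al /rX.
by rewrite scalerN opprK addrNK.
Qed.

Lemma ax_cat w1 w2 x : ax (w1 ++ w2) x = ax w1 (ax w2 x).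
Proof. by rewrite /actX foldr_cat. Qed.
Lemma ax_cons i w x : ax (i :: w) x = rx i (ax w x). Proof. by []. Qed.
Lemma ax_nil x : ax [::] x = x. Proof. by []. Qed.
Lemma axD w x y : ax w (x + y) = ax w x + ax w y.
Proof. by elim: w => //= i w ->; rewrite rxD. Qed.
Lemma axZ w c x : ax w (c *: x) = c *: ax w x.
Proof. by elim: w => //= i w ->; rewrite rxZ. Qed.
Lemma axN w x : ax w (- x) = - ax w x.
Proof. by elim: w => //= i w ->; rewrite rxN. Qed.
Lemma ax0 w : ax w 0 = 0.
Proof. by elim: w => //= i w ->; rewrite rx0. Qed.
Lemma axB w x y : ax w (x - y) = ax w x - ax w y.
Proof. by rewrite axD axN. Qed.

Lemma ax_revK w x : ax (rev w) (ax w x) = x.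
Proof.
elim: w x => //= i w IH x.
by rewrite rev_cons -cats1 ax_cat /= rxK IH.
Qed.
Lemma ax_Krev w x : ax w (ax (rev w) x) = x.
Proof. by rewrite -{1}(revK w) ax_revK. Qed.

Lemma pair_inv1 i y x : pair (ry i y) (rx i x) = pair y x.
Proof.
rewrite /rX pairBl pairBr pairBr !pairZl !pairZr hpair Aii.
rewrite [pair (al i) y]pairC.
set p := pair (alv i) x; set q := pair y (al i).
ring.
Qed.

Lemma pair_inv w y x : pair (actX alv al w y) (ax w x) = pair y x.
Proof. by elim: w => //= i w IH; rewrite pair_inv1 IH. Qed.

Variables (s t : 'I_n).
Local Notation a := (- A s t).
Local Notation b := (- A t s).

Lemma lin_t (u v : 'rV[int]_m) (c1 c2 d : int) :
  c1 *: u + c2 *: v - d *: v = c1 *: u + (c2 - d) *: v.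
Proof. by rewrite scalerBl addrA. Qed.
Lemma lin_s (u v : 'rV[int]_m) (c1 c2 d : int) :
  c1 *: u + c2 *: v - d *: u = (c1 - d) *: u + c2 *: v.
Proof. by rewrite scalerBl addrAC. Qed.

Lemma lin_s3 (x u v : 'rV[int]_m) (c1 c2 d : int) :
  x + c1 *: u + c2 *: v - d *: u = x + (c1 - d) *: u + c2 *: v.
Proof. by rewrite scalerBl addrAC !addrA. Qed.
Lemma lin_t3 (x u v : 'rV[int]_m) (c1 c2 d : int) :
  x + c1 *: u + c2 *: v - d *: v = x + c1 *: u + (c2 - d) *: v.
Proof. by rewrite scalerBl !addrA. Qed.

Lemma rx_comb i (c1 c2 : int) : rx i (c1 *: al s + c2 *: al t) =
  c1 *: al s + c2 *: al t - (c1 * A i s + c2 * A i t) *: al i.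
Proof. by rewrite {1}/rX pairDr !pairZr !hpair. Qed.

Lemma ax_alt_s k :
  ax (alt s t k) (al s) = (coefs a b k).1 *: al s + (coefs a b k).2 *: al t.
Proof.
elim: k => [|k IH]; first by rewrite /= scale1r scale0r addr0.
rewrite [alt _ _ _]/= ax_cons IH /=.
case: (coefs a b k) => c1 c2 /=.
case: (odd k); rewrite rx_comb Aii ?lin_s ?lin_t; congr (_ *: _ + _ *: _); rewrite /=; ring.
Qed.

Lemma ax_alt_trk k x :
  let T := trk a b k (pair (alv s) x) (pair (alv t) x) in
  [/\ ax (alt s t k) x = x + T.1.2 *: al s + T.2 *: al t,
      pair (alv s) (ax (alt s t k) x) = T.1.1.1 &
      pair (alv t) (ax (alt s t k) x) = T.1.1.2].
Proof.
elim: k => [|k IH]; first by rewrite /= !scale0r !addr0.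
rewrite [alt _ _ _]/= ax_cons /=.
move: IH; case: (trk a b k _ _) => [[[p q] c1] c2] /= [e1 e2 e3].
case: (odd k) => /=; rewrite !pair_rx e2 e3 !Aii; split.
- by rewrite /rX e2 e1 lin_s3.
- ring.
- ring.
- by rewrite /rX e3 e1 lin_t3.
- ring.
- ring.
Qed.

End Gen.

Definition pb (P : Prop) : bool :=
  if excluded_middle_informative P then true else false.
Lemma pbP (P : Prop) : reflect P (pb P).
Proof. by rewrite /pb; case: excluded_middle_informative => h; constructor. Qed.

Definition minP (P : nat -> Prop) : nat :=
  match excluded_middle_informative (exists k, P k) with
  | left H => @ex_minn (fun k => pb (P k))
                 (let: ex_intro k hk := H in ex_intro _ k (introT (pbP _) hk))
  | right _ => 0%N
  end.

Lemma minP_spec (P : nat -> Prop) k : P k -> P (minP P) /\ (forall j, P j -> minP P <= j)%N.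
Proof.
move=> hk; rewrite /minP; case: excluded_middle_informative => [H|[]]; last by exists k.
case: ex_minnP => j /pbP hj hmin; split=> // i hi; apply: hmin; exact/pbP.
Qed.

Lemma minP_ext (P Q : nat -> Prop) : (forall k, P k <-> Q k) -> minP P = minP Q.
Proof.
move=> e.
case: (classic (exists k, P k)) => [[k hk]|nh].
  have hq : Q k by apply/e.
  have [h1 h2] := minP_spec hk; have [h3 h4] := minP_spec hq.
  apply/eqP; rewrite eqn_leq h2 ?h4 //; [exact/e | exact/e].
rewrite /minP; case: excluded_middle_informative => [[k hk]|_]; first by case: nh; exists k.
case: excluded_middle_informative => [[k hk]|_] //; by case: nh; exists k; apply/e.
Qed.

Lemma is_GCM_tr n (A : 'M[int]_n) : is_GCM A -> is_GCM A^T.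
Proof.
case=> [h1 [h2 h3]]; split; first by move=> i; rewrite mxE.
split; first by move=> i j ij; rewrite mxE h2 // eq_sym.
by move=> i j; rewrite !mxE h3.
Qed.

Lemma rY_swap n m (al alv : 'I_n -> 'rV[int]_m) i y : rY al alv i y = rX alv al i y.
Proof. by rewrite /rY /rX pairC. Qed.
Lemma actY_swap n m (al alv : 'I_n -> 'rV[int]_m) w y :
  actY al alv w y = actX alv al w y.
Proof. by elim: w => //= i w ->; rewrite rY_swap. Qed.

Section W.
Variables (n m : nat) (al alv : 'I_n -> 'rV[int]_m) (A : 'M[int]_n).
Hypothesis hA : is_GCM A.
Hypothesis hpair : forall i j, pair (alv i) (al j) = A i j.

Lemma hpairT i j : pair (al i) (alv j) = A^T i j.
Proof. by rewrite mxE pairC hpair. Qed.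
Let hAT := is_GCM_tr hA.

Local Notation ax := (actX al alv).
Local Notation ay := (actX alv al).

Definition eqW (w1 w2 : seq 'I_n) :=
  (forall x, ax w1 x = ax w2 x) /\ (forall y, ay w1 y = ay w2 y).

Lemma eqW_refl w : eqW w w. Proof. by []. Qed.
Lemma eqW_sym w1 w2 : eqW w1 w2 -> eqW w2 w1.
Proof. by case=> h1 h2; split=> ?; rewrite ?h1 ?h2. Qed.
Lemma eqW_trans w1 w2 w3 : eqW w1 w2 -> eqW w2 w3 -> eqW w1 w3.
Proof. by case=> h1 h2 [h3 h4]; split=> ?; rewrite ?h1 ?h2 ?h3 ?h4. Qed.
Lemma eqW_cat v1 v2 w1 w2 : eqW v1 v2 -> eqW w1 w2 -> eqW (v1 ++ w1) (v2 ++ w2).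
Proof.
case=> h1 h2 [h3 h4]; split=> ?; rewrite !ax_cat; by rewrite ?h1 ?h2 ?h3 ?h4.
Qed.
Lemma eqW_ii i : eqW [:: i; i] [::].
Proof. by split=> ? /=; rewrite ?(rxK hA hpair) ?(rxK hAT hpairT). Qed.
Lemma eqW_cancel w1 w2 i : eqW (w1 ++ [:: i, i & w2]) (w1 ++ w2).
Proof.
apply: eqW_cat; first exact: eqW_refl.
by apply: (@eqW_cat [:: i; i] [::]); [apply: eqW_ii | apply: eqW_refl].
Qed.
Lemma eqW_rcons2 w i : eqW (rcons (rcons w i) i) w.
Proof.
rewrite -!cats1 -catA /= -{2}[w]cats0; exact: (@eqW_cancel w [::] i).
Qed.
Lemma eqW_rcons w1 w2 i : eqW w1 w2 -> eqW (rcons w1 i) (rcons w2 i).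
Proof. by move=> h; rewrite -!cats1; apply: eqW_cat. Qed.
Lemma eqW_cons w1 w2 i : eqW w1 w2 -> eqW (i :: w1) (i :: w2).
Proof. by move=> h; apply: (@eqW_cat [:: i] [:: i]). Qed.

Definition lenP (p : pred 'I_n) w :=
  minP (fun k => exists w', [/\ all p w', size w' = k & eqW w w']).
Definition len w := lenP predT w.

Lemma lenP_le (p : pred 'I_n) w w' : all p w' -> eqW w w' -> (lenP p w <= size w')%N.
Proof.
move=> hp he.
have hk : exists w'', [/\ all p w'', size w'' = size w' & eqW w w''] by exists w'.
by case: (@minP_spec (fun k => exists w'', [/\ all p w'', size w'' = k & eqW w w'']) _ hk) => _; apply.
Qed.

Lemma lenP_spec (p : pred 'I_n) w : all p w ->
  exists w', [/\ all p w', size w' = lenP p w & eqW w w'].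
Proof.
move=> hp.
have hk : exists w'', [/\ all p w'', size w'' = size w & eqW w w''] by exists w.
by case: (@minP_spec (fun k => exists w'', [/\ all p w'', size w'' = k & eqW w w'']) _ hk).
Qed.

Lemma lenP_eq (p : pred 'I_n) w1 w2 : eqW w1 w2 -> lenP p w1 = lenP p w2.
Proof.
move=> e; apply: minP_ext => k; split=> -[w' [h1 h2 h3]]; exists w'; split=> //.
  exact: eqW_trans (eqW_sym e) h3.
exact: eqW_trans e h3.
Qed.

Lemma lenP_size (p : pred 'I_n) w : all p w -> (lenP p w <= size w)%N.
Proof. by move=> h; apply: lenP_le h (eqW_refl _). Qed.

Lemma len_cat v u : (len (v ++ u) <= len v + len u)%N.
Proof.
have [v' [_ sv ev]] := lenP_spec (all_predT v).
have [u' [_ su eu]] := lenP_spec (all_predT u).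
rewrite /len -sv -su -size_cat; apply: lenP_le; first exact: all_predT.
exact: eqW_cat.
Qed.

Lemma len_lenP (p : pred 'I_n) u : all p u -> (len u <= lenP p u)%N.
Proof.
move=> h; have [u' [_ su eu]] := lenP_spec h.
rewrite -su; apply: lenP_le eu; exact: all_predT.
Qed.

Lemma lenP_cons (p : pred 'I_n) i u : p i -> all p u -> (lenP p (i :: u) <= (lenP p u).+1)%N.
Proof.
move=> hi h; have [u' [au su eu]] := lenP_spec h.
rewrite -su -[(size u').+1]/(size (i :: u')); apply: lenP_le; first by rewrite /= hi.
exact: eqW_cons.
Qed.

Lemma lenP_rcons (p : pred 'I_n) i u : p i -> all p u -> (lenP p (rcons u i) <= (lenP p u).+1)%N.
Proof.
move=> hi h; have [u' [au su eu]] := lenP_spec h.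
rewrite -su -(size_rcons u' i); apply: lenP_le; first by rewrite all_rcons hi.
exact: eqW_rcons.
Qed.


Definition pst (s t : 'I_n) : pred 'I_n := [pred k | (k == s) || (k == t)].

Lemma altify s t z : s != t -> all (pst s t) z ->
  exists x y k, [/\ ((x == s) && (y == t)) || ((x == t) && (y == s)),
                    (k <= size z)%N & eqW z (alt x y k)].
Proof.
move=> hst; elim: z => [|c z IH]; first by exists s, t, 0%N; rewrite !eqxx.
rewrite /= => /andP[hc hz]; have [x [y [k [hxy hk ek]]]] := IH hz.
case: k hk ek => [|k] hk ek.
  exists (if c == s then t else s), c, 1%N; split => //.
  - have hts : t != s by rewrite eq_sym.
    by move: hc; rewrite /pst inE => /orP[] /eqP ->; rewrite ?(negbTE hts) !eqxx ?orbT.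
  - by apply: (@eqW_cons z [::] c).
have ealt : alt x y k.+1 = (if odd k then x else y) :: alt x y k by [].
have [ch|nch] := eqVneq c (if odd k then x else y).
  exists x, y, k; split => //; first by apply: leq_trans (leqnSn _) (leq_trans hk _).
  apply: (@eqW_trans _ (c :: alt x y k.+1)); first exact: eqW_cons.
  rewrite ealt ch; exact: (@eqW_cancel [::] (alt x y k) _).
exists x, y, k.+2; split => //.
have -> : alt x y k.+2 = (if odd k.+1 then x else y) :: alt x y k.+1 by [].
have -> : (if odd k.+1 then x else y) = c.
  move: hc; rewrite /pst inE /= => hc.
  case/orP: hxy => /andP[/eqP ex /eqP ey]; subst x y;
  case/orP: hc => /eqP ec; subst c; case: (odd k) nch => /= /eqP nch //; by case: nch.
exact: eqW_cons.
Qed.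


Lemma braidW s t : finpair (- A s t) (- A t s) ->
  eqW (alt s t (mord (- A s t) (- A t s))) (alt t s (mord (- A s t) (- A t s))).
Proof.
move=> hf; split.
- move=> x.
  have [e1 _ _] := ax_alt_trk hA hpair s t (mord (- A s t) (- A t s)) x.
  have [e2 _ _] := ax_alt_trk hA hpair t s (mord (- A s t) (- A t s)) x.
  rewrite e1 e2.
  have [b1 b2] := fin_braid (pair (alv s) x) (pair (alv t) x) hf.
  by rewrite b1 b2 addrAC.
- move=> y.
  have hf' : finpair (- A^T s t) (- A^T t s) by rewrite !mxE; apply: finpair_sym.
  have eM : mord (- A s t) (- A t s) = mord (- A^T s t) (- A^T t s)
    by rewrite !mxE mord_sym.
  rewrite eM.
  have [e1 _ _] := ax_alt_trk hAT hpairT s t (mord (- A^T s t) (- A^T t s)) y.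
  have [e2 _ _] := ax_alt_trk hAT hpairT t s (mord (- A^T s t) (- A^T t s)) y.
  rewrite e1 e2.
  have [b1 b2] := fin_braid (pair (al s) y) (pair (al t) y) hf'.
  by rewrite b1 b2 addrAC.
Qed.


Lemma arith1 (L M : nat) : (0 < M)%N -> (M < L)%N -> (L - M.+1 + M.-1 < L)%N.
Proof. lia. Qed.
Lemma arith2 (X M : nat) : (0 < M)%N -> (X <= M.-1)%N -> (M <= X)%N -> False.
Proof. lia. Qed.

Lemma braid_ext s t : finpair (- A s t) (- A t s) ->
  eqW (alt s t (mord (- A s t) (- A t s)).+1) (alt t s (mord (- A s t) (- A t s)).-1).
Proof.
move=> hf; have hM := mord_gt0 (- A s t) (- A t s).
rewrite (alt_rcons s t).
apply: eqW_trans (eqW_rcons _ (eqW_sym (braidW hf))) _.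
rewrite -(prednK hM) alt_rcons; exact: eqW_rcons2.
Qed.

Lemma R2 s t u : s != t -> all (pst s t) u ->
  (lenP (pst s t) u <= lenP (pst s t) (rcons u s))%N ->
  exists c1 c2 d1 d2 : int, [/\ 0 <= c1, 0 <= c2, 0 <= d1 & 0 <= d2] /\
     (ax u (al s) = c1 *: al s + c2 *: al t /\ ay u (alv s) = d1 *: alv s + d2 *: alv t).
Proof.
move=> hst hu hle.
set p := pst s t.
have ps : p s by rewrite /p /pst inE eqxx.
have pt : p t by rewrite /p /pst inE eqxx orbT.
have [z [az sz ez]] := lenP_spec hu.
have [x [y [k [hxy hk ek]]]] := altify hst az.
have ezu := eqW_trans ez ek.
have [px py] : p x /\ p y by case/orP: hxy => /andP[/eqP -> /eqP ->].
have hkL : k = lenP p u.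
  apply/eqP; rewrite eqn_leq; apply/andP; split; first by rewrite -sz.
  rewrite -[X in (_ <= X)%N](size_alt x y k); apply: lenP_le ezu; exact: all_alt.
have eu : eqW u (alt s t (lenP p u)).
  case/orP: hxy => /andP[/eqP ex /eqP ey]; subst x y; first by rewrite -hkL.
  case: k hkL ezu hk ek => [|k'] hkL ezu _ _; first by rewrite -hkL.
  exfalso.
  have e2 : eqW (rcons u s) (alt s t k').
    apply: eqW_trans (eqW_rcons _ ezu) _; rewrite alt_rcons; exact: eqW_rcons2.
  have := lenP_le (all_alt k' ps pt) e2; rewrite size_alt.
  move: hle; rewrite -hkL => h1 h2; move: (leq_trans h1 h2); by rewrite ltnn.
set L := lenP p u in eu hle *.
have eX : ax u (al s) = (coefs (- A s t) (- A t s) L).1 *: al s +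
                         (coefs (- A s t) (- A t s) L).2 *: al t.
  by rewrite (proj1 eu) (ax_alt_s hA hpair).
have eY : ay u (alv s) = (coefs (- A t s) (- A s t) L).1 *: alv s +
                         (coefs (- A t s) (- A s t) L).2 *: alv t.
  by rewrite (proj2 eu) (ax_alt_s hAT hpairT) !mxE.
rewrite eX eY.
exists (coefs (- A s t) (- A t s) L).1, (coefs (- A s t) (- A t s) L).2,
  (coefs (- A t s) (- A s t) L).1, (coefs (- A t s) (- A s t) L).2.
split; last by [].
have ha : 0 <= - A s t by rewrite oppr_ge0; case: hA => _ [h _]; apply: h.
have hb : 0 <= - A t s by rewrite oppr_ge0; case: hA => _ [h _]; apply: h; rewrite eq_sym.
have hz : (- A s t == 0) = (- A t s == 0) by rewrite !oppr_eq0; case: hA => _ [_ h].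
have [h4|h4] := leP 4 (- A s t * - A t s).
  have [c1 c2 _] := coefs_inf L ha hb h4.
  have h4' : 4 <= - A t s * - A s t by rewrite mulrC.
  have [d1 d2 _] := coefs_inf L hb ha h4'.
  by split.
have hf := fin_cases ha hb hz h4.
set M := mord (- A s t) (- A t s).
have hM : (0 < M)%N by apply: mord_gt0.
have hLM : (L < M)%N.
  rewrite ltnNge; apply/negP => hML.
  have [hML'|eML] : (M < L)%N \/ M = L.
    by move: hML; rewrite leq_eqVlt => /orP[/eqP ->|->]; [right|left].
  - have [Q [aQ sQ] eQ] := alt_split (L - M.+1) M.+1 ps pt.
    rewrite subnK // in eQ.
    have e3 : eqW u (Q ++ alt t s M.-1).
      apply: eqW_trans eu _; rewrite eQ; apply: eqW_cat; first exact: eqW_refl.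
      exact: braid_ext.
    have aQ' : all p (Q ++ alt t s M.-1) by rewrite all_cat aQ all_alt.
    have := lenP_le aQ' e3; rewrite size_cat sQ size_alt -/L => h.
    by move: (leq_ltn_trans h (arith1 hM hML')); rewrite ltnn.
  - have e3 : eqW (rcons u s) (alt s t M.-1).
      apply: eqW_trans (eqW_rcons _ eu) _; rewrite -eML.
      apply: eqW_trans (eqW_rcons _ (braidW hf)) _.
      have eA : alt t s M = rcons (alt s t M.-1) s by rewrite -(alt_rcons t s) prednK.
      rewrite eA; exact: eqW_rcons2.
    have := lenP_le (all_alt M.-1 ps pt) e3; rewrite size_alt.
    move: hle; rewrite -eML => h1 h2; exact: (arith2 hM h2 h1).
have [c1 c2] := fin_pos hf hLM.
have hLM' : (L < mord (- A t s) (- A s t))%N by rewrite mord_sym.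
have [d1 d2] := fin_pos (finpair_sym hf) hLM'.
by split.
Qed.

End W.

Definition posC n m (f : 'I_n -> 'rV[int]_m) x :=
  exists c : 'I_n -> int, (forall i, 0 <= c i) /\ x = \sum_i c i *: f i.

Lemma posC_add n m (f : 'I_n -> 'rV[int]_m) x y : posC f x -> posC f y -> posC f (x + y).
Proof.
move=> [c [hc ->]] [d [hd ->]]; exists (fun i => c i + d i); split.
  by move=> i; rewrite addr_ge0.
by rewrite -big_split; apply: eq_bigr => i _; rewrite scalerDl.
Qed.
Lemma posC_scale n m (f : 'I_n -> 'rV[int]_m) a x : 0 <= a -> posC f x -> posC f (a *: x).
Proof.
move=> ha [c [hc ->]]; exists (fun i => a * c i); split.
  by move=> i; rewrite mulr_ge0.
by rewrite scaler_sumr; apply: eq_bigr => i _; rewrite scalerA.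
Qed.
Lemma posC_gen n m (f : 'I_n -> 'rV[int]_m) i : posC f (f i).
Proof.
exists (fun j => (j == i)%:R); split; first by move=> j; case: (j == i).
rewrite (bigD1 i) //= eqxx scale1r big1 ?addr0 // => j /negbTE ->.
by rewrite scale0r.
Qed.

Lemma arith3 k : (0 < k)%N -> (k <= k.-1)%N -> False.
Proof. lia. Qed.

Lemma arith4 a b c d : (a < b)%N -> (c <= d.+1)%N -> (a + c <= b + d)%N.
Proof. lia. Qed.

Lemma arith5 a b c d k : (a <= b + c)%N -> (c < d)%N -> (b + d <= k)%N ->
  (k <= a)%N -> False.
Proof. lia. Qed.

Section T.
Variables (n m : nat) (al alv : 'I_n -> 'rV[int]_m) (A : 'M[int]_n).
Hypothesis hA : is_GCM A.
Hypothesis hpair : forall i j, pair (alv i) (al j) = A i j.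
Let hAT := is_GCM_tr hA.
Let hpairT := hpairT hpair.

Local Notation ax := (actX al alv).
Local Notation ay := (actX alv al).
Local Notation eqW := (eqW al alv).
Local Notation len := (len al alv).
Local Notation lenP := (lenP al alv).

Lemma len_eqW w1 w2 : eqW w1 w2 -> len w1 = len w2.
Proof. exact: lenP_eq. Qed.

Lemma len_cons i w : (len (i :: w) <= (len w).+1)%N.
Proof. exact: (lenP_cons al alv (p := predT) isT (all_predT w)). Qed.
Lemma len_rcons i w : (len (rcons w i) <= (len w).+1)%N.
Proof. exact: (lenP_rcons al alv (p := predT) isT (all_predT w)). Qed.

Lemma Thm_T k : forall w s, len w = k -> (len w <= len (rcons w s))%N ->
  posC al (ax w (al s)) /\ posC alv (ay w (alv s)).
Proof.
elim/ltn_ind: k => k IH w s hk hle.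
have [w' [_ sw ew]] := lenP_spec al alv (all_predT w).
case: (lastP w') sw ew => [|w1 t] sw ew.
  by case: ew => e1 e2; rewrite e1 e2; split; apply: posC_gen.
rewrite size_rcons -/(len w) hk in sw.
have hw1 : (len w1 <= k.-1)%N by rewrite -sw /=; apply: lenP_size; exact: all_predT.
have hk0 : (0 < k)%N by rewrite -sw.
have ewt : eqW (rcons w t) w1.
  apply: eqW_trans (eqW_rcons _ ew) _; exact: (eqW_rcons2 hA hpair).
have hst : s != t.
  apply/negP => /eqP est; move: hle; rewrite est (len_eqW ewt) hk => h.
  exact: (arith3 hk0 (leq_trans h hw1)).
set p := pst s t.
have ps : p s by rewrite /p /pst inE eqxx.
have pt : p t by rewrite /p /pst inE eqxx orbT.
pose Q j := exists v u, [/\ all p u, eqW w (v ++ u), len v = j & (len v + lenP p u <= k)%N].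
have Q1 : Q (len w1).
  exists w1, [:: t]; split => //; first by rewrite /= pt.
    by rewrite cats1.
  have h1 : (lenP p [:: t] <= 1)%N by apply: (@lenP_size _ _ al alv p [:: t]); rewrite /= pt.
  by rewrite -(prednK hk0) -addn1 leq_add.
have [[v [u [au evu lv hvu]]] hmin] := minP_spec Q1.
set j0 := minP Q in lv hmin.
have hj0 : (j0 < k)%N.
  by apply: (leq_ltn_trans (hmin _ Q1)); apply: (leq_ltn_trans hw1); rewrite prednK.
have hv : forall r, p r -> (len v <= len (rcons v r))%N.
  move=> r pr; rewrite leqNgt; apply/negP => hlt.
  have : Q (len (rcons v r)).
    exists (rcons v r), (r :: u); split => //; first by rewrite /= pr.
      apply: eqW_trans evu _; rewrite cat_rcons.
      apply: eqW_sym; exact: (eqW_cancel hA hpair v u r).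
    apply: leq_trans (hvu).
    have h2 := lenP_cons al alv pr au.
    exact: arith4 hlt h2.
  move=> /hmin h; move: (leq_ltn_trans h hlt); by rewrite lv ltnn.
have hvk : (len v < k)%N by rewrite lv.
have [Xs Ys] := IH _ hvk v s erefl (hv s ps).
have [Xt Yt] := IH _ hvk v t erefl (hv t pt).
have hu : (lenP p u <= lenP p (rcons u s))%N.
  rewrite leqNgt; apply/negP => hlt.
  have e1 : eqW (rcons w s) (v ++ rcons u s).
    by rewrite -rcons_cat; apply: eqW_rcons.
  have h1 : (len (rcons w s) <= len v + lenP p (rcons u s))%N.
    rewrite (len_eqW e1); apply: leq_trans (len_cat al alv v (rcons u s)) _.
    by rewrite leq_add2l; apply: len_lenP; rewrite all_rcons ps au.
  exact: (arith5 h1 hlt hvu (leq_trans (eq_leq (esym hk)) hle)).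
have [c1 [c2 [d1 [d2 [[h1 h2 h3 h4] [eX eY]]]]]] := R2 hA hpair hst au hu.
split.
  rewrite (proj1 evu) ax_cat eX axD !axZ.
  by apply: posC_add; apply: posC_scale.
rewrite (proj2 evu) ax_cat eY axD !axZ.
by apply: posC_add; apply: posC_scale.
Qed.

Lemma ax_rcons w i x : ax (rcons w i) x = ax w (rX al alv i x).
Proof. by rewrite -cats1 ax_cat. Qed.
Lemma ay_rcons w i y : ay (rcons w i) y = ay w (rX alv al i y).
Proof. by rewrite -cats1 ax_cat. Qed.

Lemma dichot w s :
  (posC al (ax w (al s)) /\ posC alv (ay w (alv s))) \/
  (posC al (- ax w (al s)) /\ posC alv (- ay w (alv s))).
Proof.
case: (leqP (len w) (len (rcons w s))) => h; first by left; exact: Thm_T erefl h.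
right.
have e : eqW (rcons (rcons w s) s) w := eqW_rcons2 hA hpair w s.
have h2 : (len (rcons w s) <= len (rcons (rcons w s) s))%N.
  by rewrite (len_eqW e) ltnW.
have [X Y] := Thm_T erefl h2.
move: X Y; rewrite ax_rcons ay_rcons (rx_al hA hpair) (rx_al hAT hpairT) axN axN.
by [].
Qed.

End T.

Section Comb.
Variables (n m : nat) (f : 'I_n -> 'rV[int]_m).
Hypothesis hf : free_family f.

Lemma comb_uniq (c d : 'I_n -> int) :
  \sum_i c i *: f i = \sum_i d i *: f i -> forall i, c i = d i.
Proof.
move=> e i; apply/eqP; rewrite -subr_eq0; apply/eqP.
apply: (hf (c := fun k => c k - d k)).
rewrite (eq_bigr (fun i => c i *: f i - d i *: f i)); last by move=> k _; rewrite scalerBl.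
by rewrite sumrB e subrr.
Qed.

Lemma posC_coef x (c : 'I_n -> int) : x = \sum_i c i *: f i -> posC f x -> forall i, 0 <= c i.
Proof.
move=> -> [d [hd e]] i; rewrite (comb_uniq e); exact: hd.
Qed.

Lemma posC_negcoef x (c : 'I_n -> int) : x = \sum_i c i *: f i -> posC f (- x) ->
  forall i, c i <= 0.
Proof.
move=> ex hp i; rewrite -oppr_ge0.
apply: (posC_coef (x := - x) (c := fun i => - c i)) hp i.
by rewrite ex -sumrN; apply: eq_bigr => j _; rewrite scaleNr.
Qed.

Lemma posC_both x : posC f x -> posC f (- x) -> x = 0.
Proof.
move=> hp hn; have [c [hc ex]] := hp.
have h := posC_negcoef ex hn.
rewrite ex big1 // => i _.
have -> : c i = 0 by apply/eqP; rewrite eq_le h hc.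
by rewrite scale0r.
Qed.

Lemma f_nz i : f i != 0.
Proof.
apply/eqP => e.
have := hf (c := fun j => (j == i)%:R).
rewrite (bigD1 i) //= eqxx scale1r big1 ?addr0.
  by move=> /(_ e i); rewrite eqxx.
by move=> j /negbTE ->; rewrite scale0r.
Qed.

Lemma comb_delta i : f i = \sum_j (j == i)%:R *: f j.
Proof.
rewrite (bigD1 i) //= eqxx scale1r big1 ?addr0 //.
by move=> j /negbTE ->; rewrite scale0r.
Qed.

Lemma comb_sub (N : 'I_n -> int) c j :
  \sum_k N k *: f k - c *: f j = \sum_k (N k - (k == j)%:R * c) *: f k.
Proof.
rewrite (comb_delta j) scaler_sumr -sumrB; apply: eq_bigr => k _.
by rewrite scalerA scalerBl mulrC.
Qed.

End Comb.

Lemma unit_int (c d : int) : c * d = 1 -> c = 1 \/ c = -1.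
Proof.
move=> h.
have hd : d <= -1 \/ d = 0 \/ 1 <= d by lia.
have hc : c <= -1 \/ c = 0 \/ 1 <= c by lia.
case: hd => [hd|[hd|hd]]; case: hc => [hc|[hc|hc]]; nia.
Qed.

Section Main.
Variables (n m : nat) (A : 'M[int]_n) (alpha alphav : 'I_n -> 'rV[int]_m).
Hypothesis hA : is_GCM A.
Hypothesis hpair : forall i j, pair (alphav i) (alpha j) = A i j.
Hypothesis hfree : free_family alpha.
Hypothesis hfreev : free_family alphav.
Let hAT := is_GCM_tr hA.
Let hpairT := hpairT hpair.

Local Notation ax := (actX alpha alphav).
Local Notation ay := (actX alphav alpha).
Local Notation rx := (rX alpha alphav).
Local Notation ry := (rX alphav alpha).
Local Notation root := (is_root alpha alphav).

Lemma rootE b : root b <-> exists w i, b = ax w (alpha i).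
Proof.
split; first by case=> [[w i] /= e]; exists w, i.
by case=> w [i e]; exists (w, i).
Qed.

Lemma root_ax w b : root b -> root (ax w b).
Proof. by case=> [[w' i] /= ->]; exists (w ++ w', i); rewrite /= ax_cat. Qed.
Lemma root_al i : root (alpha i). Proof. by exists ([::], i). Qed.
Lemma root_rx i b : root b -> root (rx i b).
Proof. exact: (root_ax [:: i]). Qed.
Lemma root_N b : root b -> root (- b).
Proof.
case=> [[w i] /= ->]; exists (rcons w i, i).
by rewrite /= ax_rcons (rx_al hA hpair) axN.
Qed.
Lemma root_nz b : root b -> b != 0.
Proof.
case=> [[w i] /= ->]; apply/eqP => e.
have := ax_revK hA hpair w (alpha i); rewrite e ax0 => e2.
by move: (f_nz hfree i); rewrite -e2 eqxx.
Qed.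
Lemma root_dichot b : root b -> posC alpha b \/ posC alpha (- b).
Proof. by case=> [[w i] /= ->]; case: (dichot hA hpair w i) => [[]|[]]; [left|right]. Qed.
Lemma root_notboth b : root b -> posC alpha b -> posC alpha (- b) -> False.
Proof. by move=> r h1 h2; move: (root_nz r); rewrite (posC_both hfree h1 h2) eqxx. Qed.

Lemma posC_nat x : posC alpha x <->
  exists N : 'I_n -> nat, x = \sum_(i < n) (N i)%:Z *: alpha i.
Proof.
split.
  case=> c [hc ->]; exists (fun i => absz (c i)); apply: eq_bigr => i _.
  by rewrite gez0_abs.
case=> N ->; exists (fun i => (N i)%:Z); split => // i.
Qed.

Lemma pos_rootE b : is_pos_root alpha alphav b <-> root b /\ posC alpha b.
Proof. by rewrite /is_pos_root posC_nat. Qed.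
Lemma neg_rootE b : is_neg_root alpha alphav b <-> root b /\ posC alpha (- b).
Proof.
rewrite /is_neg_root pos_rootE; split=> -[r h]; split=> //.
  by rewrite -(opprK b); apply: root_N.
exact: root_N.
Qed.

Lemma coroot_wd w i w' j : ax w (alpha i) = ax w' (alpha j) ->
  ay w (alphav i) = ay w' (alphav j).
Proof.
move=> e.
set u := rev w' ++ w.
have eu : ax u (alpha i) = alpha j by rewrite ax_cat e (ax_revK hA hpair).
set v := ay u (alphav i).
have pv : posC alphav v.
  case: (dichot hA hpair u i) => [[_ //]|[h _]].
  exfalso; rewrite eu in h; apply: (root_notboth (root_al j)) h; exact: posC_gen.
have nv : posC alphav (- ry j v).
  case: (dichot hA hpair (j :: u) i) => [[h _]|[_ //]].
  exfalso; move: h; rewrite ax_cons eu (rx_al hA hpair) => h.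
  apply: (root_notboth (root_N (root_al j)) h); rewrite opprK; exact: posC_gen.
have p2 : pair v (alpha j) = 2.
  by rewrite -eu /v (pair_inv hA hpair) hpair (Aii hA).
have ev : v = alphav j.
  move: nv; rewrite /rX pairC p2 opprB => nv.
  case: pv => N [hN eN]; case: nv => M [hM eM].
  have eNM : \sum_k (N k + M k) *: alphav k = \sum_k (2 * (k == j)%:R) *: alphav k.
    rewrite (eq_bigr (fun k => N k *: alphav k + M k *: alphav k)); last first.
      by move=> k _; rewrite scalerDl.
    rewrite big_split /= -eN -eM addrC subrK.
    rewrite (eq_bigr (fun k => 2 *: ((k == j)%:R *: alphav k))); last first.
      by move=> k _; rewrite scalerA.
    by rewrite -scaler_sumr -comb_delta.
  have hk := comb_uniq hfreev eNM.
  have Nk : forall k, k != j -> N k = 0.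
    move=> k /negbTE kj; move: (hk k) (hN k) (hM k); rewrite kj mulr0; lia.
  have ev : v = N j *: alphav j.
    rewrite eN (bigD1 j) //= big1 ?addr0 // => k kj; by rewrite Nk // scale0r.
  move: p2; rewrite ev pairZl hpair (Aii hA) => h2.
  have -> : N j = 1 by lia.
  by rewrite scale1r.
transitivity (ay w' v); first by rewrite /v /u ax_cat (ax_Krev hAT hpairT).
by rewrite ev.
Qed.

Lemma root_repP b : root b -> exists p, root_rep alpha alphav b = Some p /\ b = ax p.1 (alpha p.2).
Proof.
move=> r; rewrite /root_rep; case: excluded_middle_informative => // H.
eexists; split; first reflexivity.
by case: (constructive_indefinite_description _ H).
Qed.

Lemma coroot_rep w i : coroot alpha alphav (ax w (alpha i)) = ay w (alphav i).
Proof.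
have [[w' j] [e1 e2]] := root_repP (root_ax w (root_al i)).
rewrite /coroot e1 /= actY_swap; apply: coroot_wd; by rewrite -e2.
Qed.


Definition sref b x := x - pair (coroot alpha alphav b) x *: b.

Lemma sword_act b x : root b -> ax (sword alpha alphav b) x = sref b x.
Proof.
move=> r; have [[w i] [e1 e2]] := root_repP r.
rewrite /sword /sref /coroot e1 /= ax_cat ax_cons /rX axB axZ (ax_Krev hA hpair) -e2.
by rewrite actY_swap -(pair_inv hA hpair w) (ax_Krev hA hpair).
Qed.

Lemma coroot_rx i b : root b -> coroot alpha alphav (rx i b) = ry i (coroot alpha alphav b).
Proof.
case=> [[w k] /= ->].
by rewrite -ax_cons !coroot_rep.
Qed.

Lemma pair_coroot_self b : root b -> pair (coroot alpha alphav b) b = 2.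
Proof. by case=> [[w k] /= ->]; rewrite coroot_rep (pair_inv hA hpair) hpair (Aii hA). Qed.

Lemma pair_ry i y x : pair (ry i y) x = pair y (rx i x).
Proof. by rewrite -{1}(rxK hA hpair i x) (pair_inv1 hA hpair). Qed.

Lemma lat_ay w i : exists N : 'I_n -> int, ay w (alphav i) = \sum_k N k *: alphav k.
Proof.
elim: w => [|j w [N eN]]; first by exists (fun k => (k == i)%:R); exact: comb_delta.
exists (fun k => N k - (k == j)%:R * pair (alpha j) (ay w (alphav i))).
by rewrite ax_cons {1}/rX eN comb_sub.
Qed.

Lemma coroot_lat b : root b -> exists N : 'I_n -> int,
  coroot alpha alphav b = \sum_k N k *: alphav k.
Proof. by case=> [[w k] /= ->]; rewrite coroot_rep; apply: lat_ay. Qed.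

Lemma ht_comb (N : 'I_n -> int) : ht alphav (\sum_k N k *: alphav k) = \sum_k N k.
Proof.
rewrite /ht; case: excluded_middle_informative => [H|[]]; last by exists N.
case: (constructive_indefinite_description _ H) => N' /= e.
by apply: eq_bigr => k _; rewrite (comb_uniq hfreev e).
Qed.

Lemma lat_ax w i : exists N : 'I_n -> int, ax w (alpha i) = \sum_k N k *: alpha k.
Proof.
elim: w => [|j w [N eN]]; first by exists (fun k => (k == i)%:R); exact: comb_delta.
exists (fun k => N k - (k == j)%:R * pair (alphav j) (ax w (alpha i))).
by rewrite ax_cons {1}/rX eN comb_sub.
Qed.

Lemma root_lat b : root b -> exists c : 'I_n -> int, b = \sum_k c k *: alpha k.
Proof. by case=> [[w k] /= ->]; apply: lat_ax. Qed.

Lemma coef_pos b (c : 'I_n -> int) j : root b -> b = \sum_k c k *: alpha k -> 0 < c j ->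
  posC alpha b.
Proof.
move=> r e h; case: (root_dichot r) => // hn.
by move: (posC_negcoef hfree e hn j); rewrite leNgt h.
Qed.

Lemma coef_neg b (c : 'I_n -> int) j : root b -> b = \sum_k c k *: alpha k -> c j < 0 ->
  posC alpha (- b).
Proof.
move=> r e h; case: (root_dichot r) => // hp.
by move: (posC_coef hfree e hp j); rewrite leNgt h.
Qed.

Lemma root_mult b (c : int) i : root b -> b = c *: alpha i -> c = 1 \/ c = -1.
Proof.
case=> [[w k] /= eb] e.
have [d ed] := lat_ax (rev w) i.
have : alpha k = \sum_j (c * d j) *: alpha j.
  rewrite -(ax_revK hA hpair w (alpha k)) -eb e axZ ed scaler_sumr.
  by apply: eq_bigr => j _; rewrite scalerA.
rewrite {1}(comb_delta alpha k) => /(comb_uniq hfree) /(_ k); rewrite eqxx.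
by move=> h; apply: (unit_int (esym h)).
Qed.

Lemma root_other b (c : 'I_n -> int) i : root b -> posC alpha b -> b = \sum_k c k *: alpha k ->
  b != alpha i -> exists j, j != i /\ 0 < c j.
Proof.
move=> r hp e hne.
have [/existsP [j /andP [h1 h2]]|/existsP nh] := boolP [exists j, (j != i) && (0 < c j)].
  by exists j.
exfalso.
have hc := posC_coef hfree e hp.
have z : forall j, j != i -> c j = 0.
  move=> j ji; apply/eqP; rewrite eq_le hc andbT leNgt.
  by apply/negP => h; apply: nh; exists j; rewrite ji h.
have eb : b = c i *: alpha i.
  by rewrite e (bigD1 i) //= big1 ?addr0 // => j ji; rewrite z // scale0r.
case: (root_mult r eb) => ec.
  by move: hne; rewrite eb ec scale1r eqxx.
by move: (hc i); rewrite ec.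
Qed.

Lemma pos_rx b i : root b -> posC alpha b -> b != alpha i -> posC alpha (rx i b).
Proof.
move=> r hp hne.
have [c e] := root_lat r.
have [j [ji hj]] := root_other r hp e hne.
apply: (coef_pos (c := fun k => c k - (k == i)%:R * pair (alphav i) b) (j := j)).
- exact: root_rx.
- by rewrite /rX {1}e comb_sub.
- by rewrite (negbTE ji) mul0r subr0.
Qed.


Lemma srefK b x : root b -> sref b (sref b x) = x.
Proof.
move=> r; rewrite {1}/sref pairBr pairZr (pair_coroot_self r) /sref.
set p := pair _ x.
rewrite -addrA -opprD -scalerDl.
have -> : p + (p - p * 2) = 0 by ring.
by rewrite scale0r subr0.
Qed.

Lemma sref_root b x : root b -> root x -> root (sref b x).
Proof. by move=> rb rx'; rewrite -sword_act //; apply: root_ax. Qed.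

Lemma in_InvE b g : root b ->
  in_Inv alpha alphav (sword alpha alphav b) g <-> [/\ root g, posC alpha g & posC alpha (- sref b g)].
Proof.
move=> rb; rewrite /in_Inv pos_rootE neg_rootE sword_act //.
split; first by case=> -[r p] [_ q].
by case=> r p q; split=> //; split => //; apply: sref_root.
Qed.

Lemma quantumE b : quantum alpha alphav b <->
  [/\ root b, posC alpha b & forall g, root g -> posC alpha g -> posC alpha (- sref b g) ->
        g <> b -> pair (coroot alpha alphav b) g = 1].
Proof.
rewrite /quantum pos_rootE; split.
  case=> -[r p] h; split=> // g rg pg ng; apply: h; exact/in_InvE.
case=> r p h; split=> // g /(in_InvE g r) [rg pg ng]; exact: h.
Qed.

Lemma comb_sub_al (M : 'I_n -> int) c i :
  alpha i - c *: \sum_k M k *: alpha k = \sum_k ((k == i)%:R - c * M k) *: alpha k.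
Proof.
rewrite (comb_delta alpha i) scaler_sumr -sumrB; apply: eq_bigr => k _.
by rewrite scalerA scalerBl.
Qed.

Lemma Q1 b i : quantum alpha alphav b -> b != alpha i ->
  0 < pair (coroot alpha alphav b) (alpha i) -> pair (coroot alpha alphav b) (alpha i) = 1.
Proof.
move=> /quantumE [rb pb hq] hne hc.
apply: hq; [exact: root_al | exact: posC_gen | | by move/eqP: hne => hne e; apply: hne].
have [M eM] := root_lat rb.
have [j [ji hj]] := root_other rb pb eM hne.
apply: (coef_neg (c := fun k => (k == i)%:R - pair (coroot alpha alphav b) (alpha i) * M k) (j := j)).
- by apply: sref_root => //; apply: root_al.
- by rewrite /sref {2}eM comb_sub_al.
- by rewrite (negbTE ji) sub0r oppr_lt0 mulr_gt0.
Qed.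


Lemma coroot_al i : coroot alpha alphav (alpha i) = alphav i.
Proof. exact: (coroot_rep [::] i). Qed.

Lemma comb_add_al (G : 'I_n -> int) c i :
  alpha i + c *: \sum_k G k *: alpha k = \sum_k ((k == i)%:R + c * G k) *: alpha k.
Proof.
rewrite (comb_delta alpha i) scaler_sumr -big_split; apply: eq_bigr => k _.
by rewrite scalerA scalerDl.
Qed.

Lemma part2 b i : quantum alpha alphav b ->
  (quantum alpha alphav (rx i b) <-> `|pair (coroot alpha alphav b) (alpha i)| <= 1).
Proof.
move=> qb; have [rb pb hq] := (quantumE b).1 qb.
set c := pair (coroot alpha alphav b) (alpha i).
have [ebi|nbi] := eqVneq b (alpha i).
  have c2 : c = 2 by rewrite /c ebi coroot_al hpair (Aii hA).
  rewrite c2; split => // /quantumE [_ pg _].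
  move: pg; rewrite ebi (rx_al hA hpair) => pg.
  by exfalso; apply: (root_notboth (root_al i) (posC_gen _ _) pg).
have hc1 : c <= 1.
  case: (ltrP 0 c) => h; first by move: (Q1 qb nbi h); rewrite -/c => ->.
  exact: le_trans h ler01.
set g := rx i b.
have rg : root g by apply: root_rx.
have pg : posC alpha g by apply: pos_rx.
have ngi : g != alpha i.
  apply/eqP => e.
  have eb : b = - alpha i by rewrite -(rxK hA hpair i b) -/g e (rx_al hA hpair).
  by apply: (root_notboth (root_al i) (posC_gen _ _)); rewrite -eb.
have pcg : forall x, pair (coroot alpha alphav g) x = pair (coroot alpha alphav b) (rx i x).
  by move=> x; rewrite coroot_rx // pair_ry.
have srg : forall x, sref g x = rx i (sref b (rx i x)).
  by move=> x; rewrite /sref pcg rxB rxZ (rxK hA hpair).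
have cg : pair (coroot alpha alphav g) (alpha i) = - c.
  by rewrite pcg (rx_al hA hpair) pairNr.
have [G eG] := root_lat rg.
have [j [ji hj]] := root_other rg pg eG ngi.
have sgi : sref g (alpha i) = \sum_k ((k == i)%:R + c * G k) *: alpha k.
  by rewrite /sref cg scaleNr opprK [X in c *: X]eG comb_add_al.
rewrite ler_norml; split.
- move=> /quantumE [_ _ hqg].
  rewrite hc1 andbT; rewrite leNgt; apply/negP => hlt.
  have : pair (coroot alpha alphav g) (alpha i) = 1.
    apply: hqg; [exact: root_al | exact: posC_gen | | by move/eqP: ngi => h e; apply: h; rewrite e].
    apply: (coef_neg (j := j) _ sgi); first by apply: sref_root => //; apply: root_al.
    rewrite (negbTE ji) add0r; nia.
  rewrite cg => h; lia.
- move=> /andP [hcl hcu]; apply/quantumE; split => // d rd pd nd dg.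
  have sgi' : sref g (alpha i) = alpha i + c *: g by rewrite /sref cg scaleNr opprK.
  have [edi|ndi] := eqVneq d (alpha i).
    rewrite edi cg.
    case: (ltrP c 0) => hc0; first lia.
    exfalso; apply: (root_notboth (sref_root rg (root_al i))) (_ : posC alpha (sref g (alpha i))) _.
      by rewrite sgi'; apply: posC_add; [apply: posC_gen | apply: posC_scale].
    by rewrite -edi.
  set d' := rx i d.
  have rd' : root d' by apply: root_rx.
  have pd' : posC alpha d' by apply: pos_rx.
  rewrite pcg -/d'.
  move: nd; rewrite srg -/d' => nd.
  case: (root_dichot (sref_root rb rd')) => [pe|ne]; last first.
    apply: hq => // ed; apply: dg.
    by rewrite -(rxK hA hpair i d) -/d' ed.
  have ee : sref b d' = alpha i.
    have [//|hne] := eqVneq (sref b d') (alpha i); exfalso.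
    apply: (root_notboth (root_rx i (sref_root rb rd')) (pos_rx (sref_root rb rd') pe hne) nd).
  have ed' : d' = alpha i - c *: b by rewrite -(srefK d' rb) ee.
  have pc : pair (coroot alpha alphav b) d' = c - c * 2.
    by rewrite ed' pairBr pairZr (pair_coroot_self rb).
  have [c0|[c0|c0]] : c = -1 \/ c = 0 \/ c = 1 by lia.
  + by rewrite pc c0.
  + exfalso; move: ed'; rewrite c0 scale0r subr0 => ed'.
    have edm : d = - alpha i by rewrite -(rxK hA hpair i d) -/d' ed' (rx_al hA hpair).
    by apply: (root_notboth (root_al i) (posC_gen _ _)); rewrite -edm.
  + exfalso; have [M eM] := root_lat rb.
    have [j' [ji' hj']] := root_other rb pb eM nbi.
    have : posC alpha (- d').
      apply: (coef_neg (c := fun k => (k == i)%:R - c * M k) (j := j') rd').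
        by rewrite ed' eM comb_sub_al.
      by rewrite (negbTE ji') c0 mul1r sub0r oppr_lt0.
    exact: root_notboth rd' pd'.
Qed.


Lemma part1 b : quantum alpha alphav b -> ~ is_simple_root alpha b ->
  exists i, quantum alpha alphav (rx i b) /\
    ht alphav (rY alpha alphav i (coroot alpha alphav b)) = ht alphav (coroot alpha alphav b) - 1.
Proof.
move=> qb ns; have [rb pb hq] := (quantumE b).1 qb.
have [M eM] := root_lat rb.
have hM := posC_coef hfree eM pb.
have h2 : \sum_k M k * pair (coroot alpha alphav b) (alpha k) = 2.
  transitivity (pair (coroot alpha alphav b) b); last exact: pair_coroot_self rb.
  rewrite [X in pair _ X]eM pair_sumr.
  by apply: eq_bigr => k _; rewrite pairZr.
have [k hk] : exists k, 0 < M k * pair (coroot alpha alphav b) (alpha k).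
  have [/existsP [k hk]|/existsP nh] :=
    boolP [exists k, 0 < M k * pair (coroot alpha alphav b) (alpha k)]; first by exists k.
  exfalso.
  have : \sum_k M k * pair (coroot alpha alphav b) (alpha k) <= 0.
    apply: sumr_le0 => k _; rewrite leNgt; apply/negP => h; apply: nh; exists k.
    exact: h.
  by rewrite h2.
have hck : 0 < pair (coroot alpha alphav b) (alpha k).
  have := hM k; nia.
have nbk : b != alpha k by apply/eqP => e; apply: ns; exists k.
have c1 := Q1 qb nbk hck.
exists k; split; first by apply/(part2 k qb); rewrite c1 normr1.
have [N eN] := coroot_lat rb.
rewrite rY_swap {1}/rX [pair (alpha k) _]pairC c1 eN comb_sub !ht_comb sumrB.
congr (_ - _); rewrite (bigD1 k) //= eqxx mulr1 big1 ?addr0 // => j /negbTE ->.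
by rewrite mul0r.
Qed.

Lemma main_thm :
  (forall b, quantum alpha alphav b -> ~ is_simple_root alpha b ->
     exists i, quantum alpha alphav (rX alpha alphav i b) /\
       ht alphav (rY alpha alphav i (coroot alpha alphav b))
         = ht alphav (coroot alpha alphav b) - 1) /\
  (forall b i, quantum alpha alphav b ->
     (quantum alpha alphav (rX alpha alphav i b) <->
      `|pair (coroot alpha alphav b) (alpha i)| <= 1)).
Proof. split; [exact: part1 | exact: part2]. Qed.

End Main.

Unset Implicit Arguments.

Theorem proposition2p5 (n m : nat) (A : 'M[int]_n)
  (alpha alphav : 'I_n -> 'rV[int]_m)
  (hA : is_GCM A)
  (hpair : forall i j, pair (alphav i) (alpha j) = A i j)
  (hfree : free_family alpha) (hfreev : free_family alphav) :
  (forall b, quantum alpha alphav b -> ~ is_simple_root alpha b ->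
     exists i, quantum alpha alphav (rX alpha alphav i b) /\
       ht alphav (rY alpha alphav i (coroot alpha alphav b))
         = ht alphav (coroot alpha alphav b) - 1) /\
  (forall b i, quantum alpha alphav b ->
     (quantum alpha alphav (rX alpha alphav i b) <->
      `|pair (coroot alpha alphav b) (alpha i)| <= 1)).
Proof. exact: (@main_thm n m A alpha alphav hA hpair hfree hfreev). Qed.
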